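(* Let $P$ be a finite $(3+1)$-free poset, $C,D$ chains of $P$, and $H$ a ladder of $(C,D)$. Then (i) $H$, as an induced subgraph of $\mathrm{inc}_P(C,D)$, is either a 4-cycle or a path; and (ii) $|H\cap C|$ and $|H\cap D|$ differ by at most 1.
   Context: $a\sim_Pb$ means $a,b$ incomparable or equal. For chains $C,D$ of $P$ (not necessarily disjoint), $\mathrm{inc}_P(C,D)$ is the bipartite graph with partite sets $C$ and $D$ (taken as a disjoint union) whose edges are pairs $c\in C$, $d\in D$ with $c\sim_Pd$. A ladder of $(C,D)$ is a connected component of $\mathrm{inc}_P(C,D)$, identified with its vertex set in $C\sqcup D$. $(3+1)$-free: no induced 3-chain plus disjoint point. *)

(* Defs.v *)
From mathcomp Require Import all_boot all_order.
Set Implicit Arguments. Unset Strict Implicit. Unset Printing Implicit Defensive.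
Import Order.TTheory.
Local Open Scope order_scope.

Section Ladders.
Variables (disp : Order.disp_t) (T : finPOrderType disp).

Definition simP (a b : T) : bool := (a == b) || ~~ (a >=< b).

Definition free31 : Prop :=
  ~ exists a b c d : T,
      [/\ a < b, b < c & [&& ~~ (d >=< a), ~~ (d >=< b) & ~~ (d >=< c)]].

Definition is_chain (C : {set T}) : Prop :=
  forall x y, x \in C -> y \in C -> x >=< y.

(* vertices of inc_P(C,D): disjoint union, inl = copy in C, inr = copy in D *)
Definition incV (C D : {set T}) : {set T + T} :=
  [set inl c | c in C] :|: [set inr d | d in D].

Definition incE (u v : T + T) : bool :=
  match u, v with
  | inl c, inr d => simP c d
  | inr d, inl c => simP c d
  | _, _ => false
  end.

Definition incRel (C D : {set T}) : rel (T + T) :=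
  fun u v => [&& u \in incV C D, v \in incV C D & incE u v].

Definition is_ladder (C D : {set T}) (H : {set T + T}) : Prop :=
  exists2 x, x \in incV C D &
    H = [set y in incV C D | connect (incRel C D) x y].

Definition HC (H : {set T + T}) : {set T} := [set c | inl c \in H].
Definition HD (H : {set T + T}) : {set T} := [set d | inr d \in H].
End Ladders.

Definition seq_adj {V : eqType} (s : seq V) (x y : V) : bool :=
  ((x, y) \in zip s (behead s)) || ((y, x) \in zip s (behead s)).

Definition cyc_adj {V : eqType} (s : seq V) (x y : V) : bool :=
  match s with
  | [::] => false
  | a :: _ => let t := rcons s a in
              ((x, y) \in zip t (behead t)) || ((y, x) \in zip t (behead t))
  end.

Definition induces_path {V : finType} (e : rel V) (H : {set V}) : Prop :=
  exists s : seq V, [/\ s != [::], uniq s, s =i H &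
    {in H &, forall x y, e x y = seq_adj s x y}].

Definition induces_C4 {V : finType} (e : rel V) (H : {set V}) : Prop :=
  exists s : seq V, [/\ size s = 4, uniq s, s =i H &
    {in H &, forall x y, e x y = cyc_adj s x y}].

(* Main.v *)
Require Import Defs.
From mathcomp Require Import all_boot all_order.
From Stdlib Require Import Classical.
From mathcomp Require Import zify.
Set Implicit Arguments. Unset Strict Implicit. Unset Printing Implicit Defensive.
Import Order.TTheory.

Module P1.
Local Open Scope order_scope.

Section Basic.
Variables (disp : Order.disp_t) (T : finPOrderType disp).
Variables (C D : {set T}).

Lemma simPC (a b : T) : simP a b = simP b a.
Proof. by rewrite /simP eq_sym comparable_sym. Qed.

Lemma simP_lt (a b : T) : a < b -> simP a b = false.
Proof.
move=> ab; rewrite /simP (lt_eqF ab) /=.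
by rewrite /Order.comparable (ltW ab).
Qed.

Lemma three (F : free31 T) (p a b c : T) :
  a < b -> b < c -> simP a p -> simP b p -> simP c p -> False.
Proof.
move=> ab bc.
have ac := lt_trans ab bc.
rewrite /simP.
case: (eqVneq a p) => [<-|ap].
  by rewrite (gt_eqF ab) /= /Order.comparable (ltW ab) orbT.
case: (eqVneq b p) => [<-|bp].
  by rewrite /= /Order.comparable (ltW ab).
case: (eqVneq c p) => [<-|cp].
  by rewrite /= /Order.comparable (ltW ac).
rewrite /= => na nb nc; apply: F.
exists a, b, c, p; split => //.
by rewrite ![p >=< _]comparable_sym na nb nc.
Qed.

Lemma gap (F : free31 T) (p a b c : T) :
  a < b -> b < c -> simP a p -> simP c p -> False.
Proof.
move=> ab bc sa sc; apply: (three F ab bc sa _ sc).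
have ac := lt_trans ab bc.
move: sa sc; rewrite /simP.
case: (eqVneq a p) => [<-|ap].
  by rewrite (gt_eqF ac) /= /Order.comparable (ltW ac) orbT.
case: (eqVneq c p) => [<-|cp].
  by rewrite /= /Order.comparable (ltW ac).
rewrite /= => na nc.
case: (eqVneq b p) => //= bp.
apply/negP => /orP [bp'|pb].
  by move: na; rewrite /Order.comparable (le_trans (ltW ab) bp').
by move: nc; rewrite /Order.comparable (le_trans pb (ltW bc)) orbT.
Qed.

Lemma sort3 (P : T -> Prop) (x y z : T) :
  x >=< y -> y >=< z -> x >=< z -> x != y -> y != z -> x != z ->
  P x -> P y -> P z ->
  (forall a b c, a < b -> b < c -> P a -> P b -> P c -> False) -> False.
Proof.
move=> cxy cyz cxz nxy nyz nxz px py pz K.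
case: (comparable_ltgtP cxy) nxy => [xy _|xy _|//].
- case: (comparable_ltgtP cyz) nyz => [yz _|yz _|//].
  + exact: (K _ _ _ xy yz).
  + case: (comparable_ltgtP cxz) nxz => [xz _|xz _|//].
    * exact: (K _ _ _ xz yz).
    * exact: (K _ _ _ xz xy).
- case: (comparable_ltgtP cyz) nyz => [yz _|yz _|//].
  + case: (comparable_ltgtP cxz) nxz => [xz _|xz _|//].
    * exact: (K _ _ _ xy xz).
    * exact: (K _ _ _ yz xz).
  + exact: (K _ _ _ yz xy).
Qed.

End Basic.

End P1.
Import P1.

Module P2.
Local Open Scope order_scope.

Section Graph.
Variables (disp : Order.disp_t) (T : finPOrderType disp).
Variables (C D : {set T}).
Local Notation e := (incRel C D).

Lemma inlV c : (inl c \in incV C D) = (c \in C).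
Proof.
rewrite /incV in_setU; apply/orP/idP => [[/imsetP [c' Hc [->]]//|/imsetP [//]]|Hc].
by left; apply/imsetP; exists c.
Qed.

Lemma inrV d : (inr d \in incV C D) = (d \in D).
Proof.
rewrite /incV in_setU; apply/orP/idP => [[/imsetP [//]|/imsetP [c' Hc [->]]//]|Hc].
by right; apply/imsetP; exists d.
Qed.

Lemma e_sym : symmetric e.
Proof. by move=> [u|u] [v|v]; rewrite /incRel /= andbCA. Qed.

Lemma e_irr u : e u u = false.
Proof. by case: u => u; rewrite /incRel /= !andbF. Qed.

Definition side (u : T + T) : bool := if u is inl _ then true else false.

Lemma e_side u v : e u v -> side v = ~~ side u.
Proof. by case: u => u; case: v => v; rewrite /incRel /= ?andbF. Qed.

Lemma e_memV u v : e u v -> u \in incV C D /\ v \in incV C D.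
Proof. by case/and3P. Qed.

Lemma e_inr d v : e (inr d) v -> exists2 c, v = inl c & (c \in C) && simP c d.
Proof.
case: v => [c|d']; last by rewrite /incRel /= !andbF.
by case/and3P => _; rewrite inlV => Hc /= Hs; exists c; rewrite ?Hc.
Qed.

Lemma e_inl c v : e (inl c) v -> exists2 d, v = inr d & (d \in D) && simP c d.
Proof.
case: v => [c'|d]; first by rewrite /incRel /= !andbF.
by case/and3P => _; rewrite inrV => Hd /= Hs; exists d; rewrite ?Hd.
Qed.

Lemma tri (F : free31 T) (HC : is_chain C) (HD : is_chain D) v a b c :
  e v a -> e v b -> e v c -> a = b \/ a = c \/ b = c.
Proof.
case: (eqVneq a b) => [|nab]; first by left.
case: (eqVneq a c) => [|nac]; first by right; left.
case: (eqVneq b c) => [|nbc]; first by right; right.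
case: v => [x|x].
- move=> /e_inl [a' ? /andP [Ha sa]] /e_inl [b' ? /andP [Hb sb]]
         /e_inl [c' ? /andP [Hc sc]].
  subst; exfalso; apply: (@sort3 _ _ (fun y => simP y x) a' b' c').
  all: try assumption; try (by apply: HD); try (by apply: HC); try (by rewrite simPC).
  all: try (by apply/eqP => E; move: nab; rewrite E eqxx).
  all: try (by apply/eqP => E; move: nbc; rewrite E eqxx).
  all: try (by apply/eqP => E; move: nac; rewrite E eqxx).
  move=> p q r pq qr sp sq sr; exact: (three F pq qr sp sq sr).
- move=> /e_inr [a' ? /andP [Ha sa]] /e_inr [b' ? /andP [Hb sb]]
         /e_inr [c' ? /andP [Hc sc]].
  subst; exfalso; apply: (@sort3 _ _ (fun y => simP y x) a' b' c').
  all: try assumption; try (by apply: HD); try (by apply: HC); try (by rewrite simPC).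
  all: try (by apply/eqP => E; move: nab; rewrite E eqxx).
  all: try (by apply/eqP => E; move: nbc; rewrite E eqxx).
  all: try (by apply/eqP => E; move: nac; rewrite E eqxx).
  move=> p q r pq qr sp sq sr; exact: (three F pq qr sp sq sr).
Qed.

End Graph.

End P2.
Import P2.


Lemma mem_zip2 (A B : eqType) (s : seq A) (t : seq B) x y :
  (x, y) \in zip s t -> (x \in s) && (y \in t).
Proof.
elim: s t => [|a s IH] [|b t] //=; rewrite in_cons => /orP [/eqP [-> ->]|/IH /andP [h1 h2]].
  by rewrite !in_cons !eqxx.
by rewrite !in_cons h1 h2 !orbT.
Qed.

Lemma seq_adj_mem (V : eqType) (s : seq V) x y :
  seq_adj s x y -> (x \in s) && (y \in s).
Proof.
by rewrite /seq_adj => /orP [] /mem_zip2 /andP [h1 /mem_behead h2]; rewrite h1 h2.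
Qed.

Lemma zip_rcons1 (V : eqType) (v0 w : V) t :
  zip (v0 :: rcons t w) (rcons t w) = rcons (zip (v0 :: t) t) (last v0 t, w).
Proof. by elim: t v0 => [|a t IH] v0 //=; rewrite IH. Qed.

Lemma seq_adj_rcons (V : eqType) (v0 w : V) t x y :
  seq_adj (v0 :: rcons t w) x y =
  [|| seq_adj (v0 :: t) x y, (x == last v0 t) && (y == w)
    | (y == last v0 t) && (x == w)].
Proof.
rewrite /seq_adj /= zip_rcons1 !mem_rcons !in_cons !xpair_eqE.
by case: (_ \in _); case: (_ \in _); rewrite /= ?orbT ?orbF //; case: (_ && _).
Qed.

Lemma seq_adj1 (V : eqType) (v0 : V) x y : seq_adj [:: v0] x y = false.
Proof. by []. Qed.

Lemma closure_conn (V : finType) (e : rel V) (S : pred V) x y :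
  (forall u v, S u -> e u v -> S v) -> S x -> connect e x y -> S y.
Proof.
move=> cl Sx /connectP [p pth ->]; elim: p x pth Sx => [|a p IH] x //=.
by case/andP => exa pth Sx; apply: IH pth (cl _ _ Sx exa).
Qed.


Section PathB.
Variables (disp : Order.disp_t) (T : finPOrderType disp).
Variables (C D : {set T}).
Local Notation e := (incRel C D).
Local Notation side := (@side _ T).
Variable (F : free31 T) (HCc : is_chain C) (HDc : is_chain D).
Variable (H : {set T + T}).
Hypothesis Hcl : forall u v, u \in H -> e u v -> v \in H.
Variable v0 : T + T.
Hypothesis Hv0 : v0 \in H.
Hypothesis Hdeg : forall a b, e v0 a -> e v0 b -> a = b.

Record Inv (t : seq (T + T)) := {
 i1 : uniq (v0 :: t);
 i2 : forall u, u \in v0 :: t -> u \in H;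
 i3 : forall x y, seq_adj (v0 :: t) x y -> e x y;
 i4 : forall x, x \in v0 :: t -> x != last v0 t -> forall y, e x y -> seq_adj (v0 :: t) x y;
 i5 : forall y, y \in v0 :: t -> e (last v0 t) y -> seq_adj (v0 :: t) (last v0 t) y;
 i6 : last v0 t != v0 -> exists2 p, p \in v0 :: t & e (last v0 t) p;
 i7 : [/\ (count side (v0 :: t) <= (count (predC side) (v0 :: t)).+1)%N,
          (count (predC side) (v0 :: t) <= (count side (v0 :: t)).+1)%N &
          if side (last v0 t) then (count (predC side) (v0 :: t) <= count side (v0 :: t))%N
          else (count side (v0 :: t) <= count (predC side) (v0 :: t))%N] }.

Lemma Inv0 : Inv [::].
Proof.
constructor => //=.
- by move=> u; rewrite inE => /eqP ->.
- by move=> x; rewrite inE => /eqP ->; rewrite eqxx.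
- by move=> y; rewrite inE => /eqP ->; rewrite e_irr.
- by rewrite eqxx.
- by case: (side v0).
Qed.

Lemma Inv_step t w : Inv t -> w \notin v0 :: t -> e (last v0 t) w -> Inv (rcons t w).
Proof.
move=> [I1 I2 I3 I4 I5 I6 I7] wn ew.
set l := last v0 t in I4 I5 I6 I7 ew.
have lin : l \in v0 :: t by rewrite /l mem_last.
have lastw : last v0 (rcons t w) = w by rewrite last_rcons.
have memr u : (u \in v0 :: rcons t w) = (u == w) || (u \in v0 :: t).
  by rewrite -rcons_cons mem_rcons in_cons.
constructor; rewrite ?lastw.
- by rewrite -rcons_cons rcons_uniq wn I1.
- move=> u; rewrite memr => /orP [/eqP ->|/I2 //].
  exact: Hcl (I2 _ lin) ew.
- move=> x y; rewrite seq_adj_rcons -/l => /or3P [/I3 //|/andP [/eqP -> /eqP ->]//|].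
  by case/andP => /eqP -> /eqP ->; rewrite e_sym.
- move=> x; rewrite memr => /orP [/eqP -> |xin]; first by rewrite eqxx.
  move=> _ y exy; rewrite seq_adj_rcons -/l.
  case: (eqVneq x l) => [xl|xl]; last by rewrite I4.
  subst x.
  case yin: (y \in v0 :: t); first by rewrite I5.
  have -> : y = w.
    case: (eqVneq l v0) => [lv|lv].
      by apply: Hdeg; rewrite -lv.
    case: (I6 lv) => p pin ep.
    case: (tri F HCc HDc ep ew exy) => [pw|[py|//]].
      by move: wn; rewrite -pw pin.
    by move: yin; rewrite -py pin.
  by rewrite eqxx orbT.
- move=> y; rewrite memr => /orP [/eqP ->|yin]; first by rewrite e_irr.
  move=> ewy; rewrite seq_adj_rcons -/l.
  case: (eqVneq y l) => [->|yl]; first by rewrite !eqxx !orbT.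
  have := I4 _ yin yl w; rewrite e_sym ewy => /(_ isT) /seq_adj_mem /andP [_ win].
  by rewrite win in wn.
- move=> _; exists l; first by rewrite memr lin orbT.
  by rewrite e_sym.
- have sw := e_side ew.
  rewrite -rcons_cons -cats1 !count_cat /= sw.
  case: I7; case: (side l) => /=; rewrite !addn0 !addn1 /=; case: (side v0) => /=; intros; split; lia.
Qed.
End PathB.


Section Card.
Variables (disp : Order.disp_t) (T : finPOrderType disp).

Definition getl (u : T + T) : option T := if u is inl c then Some c else None.
Definition getr (u : T + T) : option T := if u is inr c then Some c else None.

Lemma card_HC (H : {set T + T}) s : uniq s -> s =i H -> #|HC H| = count (@side _ T) s.
Proof.
move=> us sH.
have -> : #|HC H| = #|pmap getl s|.
  apply: eq_card => c; rewrite /HC inE mem_pmap -sH.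
  apply/idP/mapP => [cin|[u uin]]; first by exists (inl c).
  by case: u uin => // c' uin [->].
rewrite (card_uniqP _) ?size_pmap; last by apply: (pmap_uniq (g := inl)) => // [[]].
by apply: eq_count => [[]].
Qed.

Lemma card_HD (H : {set T + T}) s : uniq s -> s =i H ->
  #|HD H| = count (predC (@side _ T)) s.
Proof.
move=> us sH.
have -> : #|HD H| = #|pmap getr s|.
  apply: eq_card => c; rewrite /HD inE mem_pmap -sH.
  apply/idP/mapP => [cin|[u uin]]; first by exists (inr c).
  by case: u uin => // c' uin [->].
rewrite (card_uniqP _) ?size_pmap; last by apply: (pmap_uniq (g := inr)) => // [[]].
by apply: eq_count => [[]].
Qed.
End Card.

Section PathC.
Variables (disp : Order.disp_t) (T : finPOrderType disp).
Variables (C D : {set T}).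
Local Notation e := (incRel C D).
Local Notation side := (@side _ T).
Variable (F : free31 T) (HCc : is_chain C) (HDc : is_chain D).
Variable (H : {set T + T}).
Hypothesis Hcl : forall u v, u \in H -> e u v -> v \in H.
Variable v0 : T + T.
Hypothesis Hv0 : v0 \in H.
Hypothesis Hdeg : forall a b, e v0 a -> e v0 b -> a = b.
Hypothesis Hconn : forall y, y \in H -> connect e v0 y.

Lemma Inv_final : exists t, Inv C D H v0 t /\ (forall w, e (last v0 t) w -> w \in v0 :: t).
Proof.
suff K : forall n t, Inv C D H v0 t -> (#|{: T + T}| - size (v0 :: t) <= n)%N ->
  exists t, Inv C D H v0 t /\ (forall w, e (last v0 t) w -> w \in v0 :: t).
  by apply: (K _ _ (Inv0 C D Hv0)).
elim=> [|n IH] t It Hn;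
  (case: (classic (exists w, e (last v0 t) w /\ w \notin v0 :: t)) => [[w [ew wn]]|nex];
  last by exists t; split => // w ew; apply/negPn/negP => wn; apply: nex; exists w).
- have It' := Inv_step F HCc HDc Hcl Hv0 Hdeg It wn ew.
  have sz : (size (v0 :: rcons t w) <= #|{: T + T}|)%N.
    by rewrite -(card_uniqP (i1 It')); apply: max_card.
  exfalso; move: sz Hn; rewrite /= size_rcons; lia.
- have It' := Inv_step F HCc HDc Hcl Hv0 Hdeg It wn ew.
  have sz : (size (v0 :: rcons t w) <= #|{: T + T}|)%N.
    by rewrite -(card_uniqP (i1 It')); apply: max_card.
  apply: (IH (rcons t w) It').
  move: sz Hn; rewrite /= size_rcons; lia.
Qed.

Lemma path_result : induces_path e H /\
  (#|HC H| <= #|HD H|.+1)%N /\ (#|HD H| <= #|HC H|.+1)%N.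
Proof.
have [t [[I1 I2 I3 I4 I5 I6 I7] Hend]] := Inv_final.
set s := v0 :: t.
have scl : forall x y, x \in s -> e x y -> y \in s.
  move=> x y xs exy; case: (eqVneq x (last v0 t)) => [xl|xl]; first by move: exy; rewrite xl; apply: Hend.
  by case/andP: (seq_adj_mem (I4 _ xs xl _ exy)).
have sH : s =i H.
  move=> y; apply/idP/idP; first exact: I2.
  move=> yH; apply: (closure_conn (S := fun u => u \in s)) (Hconn yH).
  - by move=> u v; apply: scl.
  - by rewrite inE eqxx.
split.
  exists s; split => //.
  move=> x y; rewrite -!sH => xs ys.
  apply/idP/idP; last exact: I3.
  case: (eqVneq x (last v0 t)) => [->|xl]; first exact: I5.
  exact: I4.
rewrite (card_HC I1 sH) (card_HD I1 sH).
by case: I7.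
Qed.
End PathC.


Section Cyc.
Variables (disp : Order.disp_t) (T : finPOrderType disp).
Variables (C D : {set T}).
Local Notation e := (incRel C D).
Local Notation side := (@side _ T).
Variable (F : free31 T) (HCc : is_chain C) (HDc : is_chain D).
Variable (H : {set T + T}).
Hypothesis HinV : forall u, u \in H -> u \in incV C D.
Hypothesis Hcl : forall u v, u \in H -> e u v -> v \in H.
Hypothesis Hconn : forall u y, u \in H -> y \in H -> connect e u y.
Variable x0 : T + T.
Hypothesis Hx0 : x0 \in H.
Hypothesis Hall : forall v, v \in H -> exists a b, [/\ e v a, e v b & a <> b].

Lemma nbr2 v a b : e v a -> e v b -> a <> b -> forall y, e v y -> y = a \/ y = b.
Proof.
move=> ea eb nab y ey.
case: (tri F HCc HDc ea eb ey) => [//|[->|->]]; by [left|right].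
Qed.

Lemma other v a : v \in H -> exists2 b, e v b & b <> a.
Proof.
move=> /Hall [p [q [ep eq npq]]].
case: (eqVneq p a) => [pa|pa]; last by exists p => //; apply/eqP.
by exists q => // qa; apply: npq; rewrite pa qa.
Qed.

Lemma inl_eq (a b : T) : (inl a == inl b :> T + T) = (a == b).
Proof. by apply/eqP/eqP => [[]|->]. Qed.
Lemma inr_eq (a b : T) : (inr a == inr b :> T + T) = (a == b).
Proof. by apply/eqP/eqP => [[]|->]. Qed.
Lemma inlr_eq (a b : T) : (inl a == inr b :> T + T) = false.
Proof. by apply/eqP. Qed.
Lemma inrl_eq (a b : T) : (inr a == inl b :> T + T) = false.
Proof. by apply/eqP. Qed.

Definition fb (c : T) : nat := #|[set y : T | (y < c)%O]|.

Lemma fb_lt c c' : (c < c')%O -> (fb c < fb c')%N.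
Proof.
move=> cc; apply: proper_card; apply/properP; split.
  by apply/subsetP => y; rewrite !inE => yc; apply: lt_trans yc cc.
by exists c; rewrite !inE ?cc ?ltxx.
Qed.

Lemma cycle_result : induces_C4 e H /\
  (#|HC H| <= #|HD H|.+1)%N /\ (#|HD H| <= #|HC H|.+1)%N.
Proof.
have [c0 Hc0] : exists c, inl c \in H.
  case: x0 Hx0 => [c|d] Hx; first by exists c.
  have [a [_ [ea _ _]]] := Hall Hx.
  have [c ac _] := e_inr ea; exists c; rewrite -ac; exact: Hcl Hx ea.
case: (@arg_maxnP _ c0 (fun c => inl c \in H) fb Hc0) => cm Hcm Hmax.
have Hlt : forall c, inl c \in H -> c <> cm -> (c < cm)%O.
  move=> c Hc ncm.
  have cC : c \in C by rewrite -(inlV C D); apply: HinV.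
  have cmC : cm \in C by rewrite -(inlV C D); apply: HinV.
  case: (comparable_ltgtP (HCc cC cmC)) => // cmc.
  by move: (Hmax _ Hc) => /=; rewrite leqNgt (fb_lt cmc).
have [a [b [ea eb nab]]] := Hall Hcm.
have [d ad _] := e_inl ea; have [d' bd _] := e_inl eb; subst a b.
have Ncm := nbr2 ea eb nab.
have Hd : inr d \in H by apply: Hcl Hcm ea.
have Hd' : inr d' \in H by apply: Hcl Hcm eb.
have [b1 eb1 nb1] := other (inl cm) Hd.
have [c1 ? /andP [c1C s1]] := e_inr eb1; subst b1.
have [b2 eb2 nb2] := other (inl cm) Hd'.
have [c2 ? /andP [c2C s2]] := e_inr eb2; subst b2.
have Hc1 : inl c1 \in H by apply: Hcl Hd eb1.
have Hc2 : inl c2 \in H by apply: Hcl Hd' eb2.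
have lt1 : (c1 < cm)%O by apply: Hlt => // E; apply: nb1; rewrite E.
have lt2 : (c2 < cm)%O by apply: Hlt => // E; apply: nb2; rewrite E.
have edcm : e (inr d) (inl cm) by rewrite e_sym.
have ed'cm : e (inr d') (inl cm) by rewrite e_sym.
have [c' [Ec] /andP [_ sd]] := e_inr edcm; rewrite -Ec in sd.
have [c'' [Ec'] /andP [_ sd']] := e_inr ed'cm; rewrite -Ec' in sd'.
have c12 : c1 = c2.
  apply/eqP; apply/negP => /negP n12.
  case: (comparable_ltgtP (HCc c1C c2C)) n12 => [l12|l21|] _ //.
  - exact: (gap F l12 lt2 s1 sd).
  - exact: (gap F l21 lt1 s2 sd').
subst c2.
have Nd := nbr2 edcm eb1 (fun E => nb1 (esym E)).
have Nd' := nbr2 ed'cm eb2 (fun E => nb2 (esym E)).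
have ec1d : e (inl c1) (inr d) by rewrite e_sym.
have ec1d' : e (inl c1) (inr d') by rewrite e_sym.
have Nc1 := nbr2 ec1d ec1d' nab.
set S := [:: inl cm; inr d; inl c1; inr d'].
have Scl : forall u v, u \in S -> e u v -> v \in S.
  move=> u v; rewrite /S !inE => /or4P [] /eqP -> ev.
  - by case: (Ncm _ ev) => ->; rewrite eqxx ?orbT.
  - by case: (Nd _ ev) => ->; rewrite eqxx ?orbT.
  - by case: (Nc1 _ ev) => ->; rewrite eqxx ?orbT.
  - by case: (Nd' _ ev) => ->; rewrite eqxx ?orbT.
have SH : S =i H.
  move=> y; apply/idP/idP.
    rewrite /S !inE => /or4P [] /eqP -> //.
  move=> yH; apply: (closure_conn (S := fun u => u \in S)) (Hconn Hcm yH).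
  - by move=> u v; apply: Scl.
  - by rewrite /S inE eqxx.
have n1 : (cm == c1) = false by apply/eqP => E; apply: nb1; rewrite E.
have n2 : (d == d') = false by apply/eqP => E; apply: nab; rewrite E.
have uS : uniq S.
  by rewrite /S /= !inE !inl_eq !inr_eq !inlr_eq !inrl_eq n1 n2.
have adj : {in H &, forall x y, e x y = cyc_adj S x y}.
  move=> x y; rewrite -!SH /S !inE => /or4P [] /eqP -> /or4P [] /eqP ->;
    rewrite /cyc_adj /= !inE !xpair_eqE ?inl_eq ?inr_eq ?inlr_eq ?inrl_eq ?n1 ?n2 ?eqxx /=.
  all: rewrite ?andbF ?orbF ?andbT ?orbT ?e_irr //; try by rewrite /incRel /= ?andbF.
split; first by exists S; split.
by rewrite (card_HC uS SH) (card_HD uS SH).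
Qed.
End Cyc.

Local Open Scope order_scope.

Theorem mainTheorem13 (disp : Order.disp_t) (T : finPOrderType disp)
  (C D : {set T}) (H : {set T + T}) :
  free31 T -> is_chain C -> is_chain D -> is_ladder C D H ->
  (induces_C4 (incRel C D) H \/ induces_path (incRel C D) H) /\
  (#|HC H| <= #|HD H|.+1)%N /\ (#|HD H| <= #|HC H|.+1)%N.
Proof.
move=> F HCc HDc [x0 Hx0 ->].
set H0 := [set y in incV C D | connect (incRel C D) x0 y].
have csym := sym_connect_sym (@e_sym _ T C D).
have HinV : forall u, u \in H0 -> u \in incV C D by move=> u; rewrite inE => /andP [].
have Hcl : forall u v, u \in H0 -> incRel C D u v -> v \in H0.
  move=> u v; rewrite !inE => /andP [_ cu] euv.
  apply/andP; split; last exact: connect_trans cu (connect1 euv). by move: (e_memV euv).2; rewrite !inE.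
have Hconn : forall u y, u \in H0 -> y \in H0 -> connect (incRel C D) u y.
  move=> u y; rewrite !inE => /andP [_ cu] /andP [_ cy].
  by apply: connect_trans cy; rewrite csym.
have Hx : x0 \in H0 by rewrite inE Hx0 connect0.
case: (classic (exists v0, v0 \in H0 /\
   forall a b, incRel C D v0 a -> incRel C D v0 b -> a = b)) => [[v0 [Hv0 Hdeg]]|nex].
  have [P1 P2] := path_result F HCc HDc Hcl Hv0 Hdeg (fun y => Hconn _ _ Hv0).
  by split; [right|].
have Hall : forall v, v \in H0 -> exists a b, [/\ incRel C D v a, incRel C D v b & a <> b].
  move=> v Hv; apply: NNPP => nn; apply: nex; exists v; split => // a b ea eb.
  by apply: NNPP => nab; apply: nn; exists a, b; split.
have [P1 P2] := cycle_result F HCc HDc HinV Hcl Hconn Hx Hall.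
by split; [left|].
Qed.
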